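(* Let $n\ge1$ and suppose $d^\nabla_1=\nabla,d^\nabla_2,\dots,d^\nabla_n$ solve the equations $(A_k)$ for all $k\le n$. Then the equation $(A_{n+1})$ is compatible, i.e. $\big[\delta,\ \tfrac12\sum_{1\le k\le n}[d^\nabla_k,d^\nabla_{n+1-k}]\big]=0$.
   Context: $M$ smooth manifold, $\nabla$ torsion-free (Levi-Civita) connection on $T_M$. $C^*(\mathfrak h)=\Omega_M\otimes_{C^\infty_M}\Gamma(\widehat{\mathrm{Sym}}(T_M^\vee))$, locally with coordinates $x^i$, $y_i=\partial/\partial x^i$, dual frame $y^i$ (degree 0). $\delta=dx^i\partial/\partial y^i$; $d^\nabla_1=\nabla$ acts as the induced covariant derivative; for $k\ge2$, $d^\nabla_k$ is an $\Omega_M$-linear derivation with $d^\nabla_k(y^i)\in\Omega^1_M\otimes\Gamma(\mathrm{Sym}^kT_M^\vee)$; $[\cdot,\cdot]$ is the graded commutator of derivations. Equations: $(A_1)$: $-[\delta,d^\nabla_1]=0$; for $m\ge2$, $(A_m)$: $-[\delta,d^\nabla_m]=\frac12\sum_{1\le k\le m-1}[d^\nabla_k,d^\nabla_{m-k}]$. Equation $(A_m)$ is called compatible if its right-hand side graded-commutes with $\delta$. *)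

(* Defs.v *)
From HB Require Import structures.
From mathcomp Require Import all_boot all_order all_algebra.
Set Implicit Arguments. Unset Strict Implicit. Unset Printing Implicit Defensive.
Import GRing.Theory.
Local Open Scope ring_scope.

(* Graded commutator in an associative algebra of operators A (e.g. the
   algebra of K-linear endomorphisms of C^*(h), composition = product).
   p, q are the parities of a and b:  [a,b] = a b - (-1)^{|a||b|} b a. *)
Definition gcomm (K : fieldType) (A : lalgType K) (p q : bool) (a b : A) : A :=
  a * b - (-1) ^+ (p && q) * (b * a).

Definition rhsA (K : fieldType) (A : lalgType K) (d : nat -> A) (m : nat) : A :=
  (2%:R : K)^-1 *: \sum_(1 <= k < m) gcomm true true (d k) (d (m - k)%N).

Definition eqA (K : fieldType) (A : lalgType K) (delta : A) (d : nat -> A)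
  (m : nat) : Prop :=
  if m == 1%N then - gcomm true true delta (d 1%N) = 0
  else - gcomm true true delta (d m) = rhsA d m.

Definition compatibleA (K : fieldType) (A : lalgType K) (delta : A)
  (d : nat -> A) (m : nat) : Prop :=
  gcomm true false delta (rhsA d m) = 0.

(* Main.v *)
Require Import Defs.
From mathcomp Require Import all_boot all_order all_algebra.
From mathcomp Require Import zify.
Import GRing.Theory.
Local Open Scope ring_scope.

Definition PP (K : fieldType) (A : lalgType K) (d : nat -> A) (m : nat) : A :=
  \sum_(1 <= k < m) d k * d (m - k)%N.
Arguments PP {K A}.

Lemma gcommTT (K : fieldType) (A : lalgType K) (a b : A) :
  gcomm true true a b = a * b + b * a.
Proof. by rewrite /gcomm /= expr1 mulN1r opprK. Qed.

Lemma rhsA_PP (K : fieldType) (A : lalgType K) (h2 : (2%:R : K) != 0)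
  (d : nat -> A) (m : nat) : rhsA d m = PP d m.
Proof.
rewrite /rhsA /PP.
under eq_bigr do rewrite gcommTT.
rewrite big_split /=.
have -> : \sum_(1 <= i < m) d (m - i)%N * d i = \sum_(1 <= k < m) d k * d (m - k)%N.
  case: m => [|m]; first by rewrite !big_geq.
  rewrite big_nat_rev /= add1n.
  apply: eq_big_nat => i /andP [hi1 him].
  have e1 : (m.+1 - (m.+2 - i.+1))%N = i by lia.
  have e2 : (m.+2 - i.+1)%N = (m.+1 - i)%N by lia.
  by rewrite e1 e2.
rewrite -mulr2n -scaler_nat scalerA mulVf // scale1r.
by [].
Qed.

Lemma keyid (K : fieldType) (A : lalgType K) (x b c : A) :
  x * (b * c) - b * c * x = (x * b + b * x) * c - b * (x * c + c * x).
Proof.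
rewrite mulrDl mulrDr !mulrA opprD addrA.
by rewrite addrK.
Qed.

Theorem lemmaA1 (K : fieldType) (A : lalgType K) (h2 : (2%:R : K) != 0)
  (delta : A) (d : nat -> A) (n : nat) :
  (1 <= n)%N ->
  (forall k, (1 <= k <= n)%N -> eqA delta d k) ->
  compatibleA delta d n.+1.
Proof.
move=> hn hA.
have hE : forall k, (1 <= k <= n)%N -> delta * d k + d k * delta = - PP d k.
  move=> k hk; have := hA k hk; rewrite /eqA gcommTT.
  case: eqP => [->|_].
    by move=> H; rewrite /PP big_geq // oppr0; apply/eqP; rewrite -oppr_eq0 H.
  by rewrite (@rhsA_PP _ _ h2) gcommTT => H; rewrite -H opprK.
rewrite /compatibleA (@rhsA_PP _ _ h2) /gcomm /= expr0 mul1r /PP.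
rewrite mulr_sumr mulr_suml -sumrB.
rewrite (eq_big_nat _ _ (F2 := fun k => d k * PP d (n.+1 - k)%N - PP d k * d (n.+1 - k)%N)); last first.
  move=> i /andP [hi1 hin].
  rewrite keyid hE; last by apply/andP; split => //; lia.
  rewrite hE; last by apply/andP; split; lia.
  by rewrite mulNr mulrN opprK addrC.
rewrite sumrB; apply/eqP; rewrite subr_eq0; apply/eqP.
(* both sides equal the triple sum *)
rewrite /PP.
under eq_bigr do rewrite mulr_sumr.
under [RHS]eq_bigr do rewrite mulr_suml.
transitivity (\sum_(1 <= a < n.+1) \sum_(1 <= k < n.+1)
   (if (a < k)%N then d a * d (k - a)%N * d (n.+1 - k)%N else 0)); last first.
  rewrite exchange_big_nat; apply: eq_big_nat => k /andP [hk1 hkN].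
  rewrite (big_nat_widen _ _ _ _ _ (ltnW hkN)) big_mkcond /=.
  by rewrite [RHS]big_mkcond.
apply: eq_big_nat => a /andP [ha1 haN].
rewrite [RHS](@big_cat_nat _ _ _ a.+1) //=.
rewrite [X in _ = X + _]big1_seq ?add0r; last first.
  move=> k /andP [_]; rewrite mem_index_iota => /andP [_ hk].
  by rewrite ltnNge -ltnS hk.
rewrite -{1}(add1n a) big_addn.
apply: eq_big_nat => b /andP [hb1 hb].
rewrite ifT; last by lia.
have -> : (b + a - a)%N = b by lia.
have -> : (n.+1 - (b + a))%N = (n.+1 - a - b)%N by lia.
by rewrite mulrA.
Qed.
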